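(* Let $n\ge1$, $\Gamma\ge1$, $\varphi:(0,1)\to[0,\infty)$, $\alpha\in(0,1)$, and let $x_0>0$ be such that $\sigma_n^2(x_0)>0$. Then under $H_0(\Gamma)$, $$\mathbb{P}\big(\exists x\in(0,1): T_n(x)\ge f_{\alpha,n}(x)\,\big|\,\mathcal{F}\big)\le\alpha .$$
   Context: Paired observational study: there are $n$ pairs; in pair $i$, units $j=1,2$ have control potential outcome $R_{Cij}$, treated potential outcome $R_{Tij}$ and treatment indicator $Z_{ij}\in\{0,1\}$. Throughout, everything is conditional on the event that exactly one unit per pair is treated. $\mathcal{F}$ is the $\sigma$-field generated by all potential outcomes. Observed outcomes are $R^{obs}_{ij}=Z_{ij}R_{Tij}+(1-Z_{ij})R_{Cij}$ and $Y_i=(Z_{i1}-Z_{i2})(R^{obs}_{i1}-R^{obs}_{i2})$. Standing assumption: $\mathbb{P}(Y_i=0)=0$ for all $i$. For $\Gamma\ge1$, the sensitivity null $H_0(\Gamma)$ asserts: $R_{Tij}=R_{Cij}$ for all $i,j$; and conditional on $\mathcal{F}$, assignments are independent across pairs and for every $i$, $\frac1\Gamma\le \frac{\mathbb{P}(Z_{i1}=1\mid\mathcal{F})/\mathbb{P}(Z_{i1}=0\mid\mathcal{F})}{\mathbb{P}(Z_{i2}=1\mid\mathcal{F})/\mathbb{P}(Z_{i2}=0\mid\mathcal{F})}\le\Gamma$. Let $Y_{(1)},\dots,Y_{(n)}$ be the $Y_i$ ordered so that $|Y_{(1)}|\le\dots\le|Y_{(n)}|$, $c_i=\varphi(i/(n+1))$,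 $T_n(x)=0$ for $x<1/(n+1)$ and $T_n(x)=\sum_{i=\lceil (1-x)(n+1)\rceil}^{n} c_i\mathbf{1}\{Y_{(i)}>0\}$ for $x\ge1/(n+1)$. Let $\rho_\Gamma=\Gamma/(1+\Gamma)$, $\sigma_n^2(x)=\rho_\Gamma(1-\rho_\Gamma)\sum_{i=\lceil (1-x)(n+1)\rceil}^n c_i^2$, $\lambda_n=\sqrt{2\log(1/\alpha)/\sigma_n^2(x_0)}$, and $$f_{\alpha,n}(x)=\frac1{\lambda_n}\Big[\log\frac1\alpha+\sum_{i=\lceil (1-x)(n+1)\rceil}^n\log\big(1+\rho_\Gamma(e^{c_i\lambda_n}-1)\big)\Big].$$ *)

(* Defs.v *)
From HB Require Import structures.
From mathcomp Require Import all_boot all_order fingroup perm all_algebra.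
From mathcomp Require Import boolp reals sequences exp.
Set Implicit Arguments. Unset Strict Implicit. Unset Printing Implicit Defensive.
Import Order.TTheory GRing.Theory Num.Theory.
Local Open Scope ring_scope.

Section PairedSensitivity.
Variable R : realType.

(* A treatment assignment for n pairs with exactly one treated unit per pair:
   z i = true  <->  Z_{i1} = 1, Z_{i2} = 0 ;  z i = false <-> Z_{i1} = 0, Z_{i2} = 1.
   Units are indexed by j : 'I_2 (j = 0 is unit 1, j = 1 is unit 2). *)
Definition assignment (n : nat) := {ffun 'I_n -> bool}.

Definition Zind (n : nat) (z : assignment n) (i : 'I_n) (j : 'I_2) : R :=
  if j == ord0 then (z i)%:R else (~~ z i)%:R.

Definition robs (n : nat) (rT rC : 'I_n -> 'I_2 -> R) (z : assignment n)
    (i : 'I_n) (j : 'I_2) : R :=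
  Zind z i j * rT i j + (1 - Zind z i j) * rC i j.

Definition Yobs (n : nat) (rT rC : 'I_n -> 'I_2 -> R) (z : assignment n)
    (i : 'I_n) : R :=
  (Zind z i ord0 - Zind z i ord_max) *
  (robs rT rC z i ord0 - robs rT rC z i ord_max).

(* conditional law of the assignment given F: independent across pairs,
   P(Z_{i1} = 1 | F) = p i *)
Definition weight (n : nat) (p : 'I_n -> R) (z : assignment n) : R :=
  \prod_(i < n) (if z i then p i else 1 - p i).

(* scores c_i = phi(i/(n+1)), i = 1..n ; the ordinal k : 'I_n stands for i = k+1 *)
Definition cw (phi : R -> R) (n : nat) (k : 'I_n) : R :=
  phi (k.+1%:R / n.+1%:R).

Definition inTail (n : nat) (x : R) (k : 'I_n) : bool :=
  (Num.ceil ((1 - x) * n.+1%:R) <= (k.+1)%:Z)%R.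

(* T_n(x), where Yord k = Y_(k+1) *)
Definition Tn (phi : R -> R) (n : nat) (Yord : 'I_n -> R) (x : R) : R :=
  if x < 1 / n.+1%:R then 0
  else \sum_(k < n | inTail x k) cw phi k * ((0 < Yord k)%R)%:R.

Definition rhoG (G : R) : R := G / (1 + G).

Definition sigma2 (phi : R -> R) (G : R) (n : nat) (x : R) : R :=
  rhoG G * (1 - rhoG G) * \sum_(k < n | inTail x k) cw phi k ^+ 2.

Definition lambdan (phi : R -> R) (G : R) (n : nat) (alpha x0 : R) : R :=
  Num.sqrt (2 * ln (1 / alpha) / sigma2 phi G n x0).

Definition falpha (phi : R -> R) (G : R) (n : nat) (alpha x0 x : R) : R :=
  let l := lambdan phi G n alpha x0 in
  1 / l * (ln (1 / alpha) +
    \sum_(k < n | inTail x k) ln (1 + rhoG G * (expR (cw phi k * l) - 1))).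

(* sensitivity null H_0(Gamma), conditional on F and on one treated unit per pair:
   no treatment effect, and the conditional probability that unit 1 of pair i is
   treated lies in [1/(1+Gamma), Gamma/(1+Gamma)]. *)
Definition H0 (n : nat) (G : R) (rT rC : 'I_n -> 'I_2 -> R) (p : 'I_n -> R) : Prop :=
  (forall i j, rT i j = rC i j) /\
  (forall i, 1 / (1 + G) <= p i <= G / (1 + G)).

End PairedSensitivity.

(* Main.v *)
Require Import Defs.
From HB Require Import structures.
From mathcomp Require Import all_boot all_order fingroup perm all_algebra.
From mathcomp Require Import boolp reals sequences exp.
From mathcomp Require Import ring lra zify.
Import Order.TTheory GRing.Theory Num.Theory.
Set Implicit Arguments. Unset Strict Implicit. Unset Printing Implicit Defensive.
Local Open Scope ring_scope.

Section Gen.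
Variable R : realType.

Definition ext n (f : {ffun 'I_n -> bool}) (b : bool) : {ffun 'I_n.+1 -> bool} :=
  [ffun i => if unlift ord_max i is Some j then f j else b].

Lemma ext_max n f b : @ext n f b ord_max = b.
Proof. by rewrite ffunE unlift_none. Qed.

Lemma ext_widen n f b j : @ext n f b (widen_ord (leqnSn n) j) = f j.
Proof.
have -> : widen_ord (leqnSn n) j = lift ord_max j by apply: val_inj; rewrite /= /bump leqNgt ltn_ord.
by rewrite ffunE liftK.
Qed.

Lemma sum_ext n (F : {ffun 'I_n.+1 -> bool} -> R) :
  \sum_z F z = \sum_(b : bool) \sum_(f : {ffun 'I_n -> bool}) F (ext f b).
Proof.
rewrite pair_big /=.
rewrite (reindex (fun p : bool * {ffun 'I_n -> bool} => ext p.2 p.1)) //=.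
exists (fun z : {ffun 'I_n.+1 -> bool} => (z ord_max, [ffun j => z (lift ord_max j)])).
  move=> [b f] _ /=; rewrite ext_max; congr pair; apply/ffunP=> j.
  by rewrite !ffunE liftK.
move=> z _ /=; apply/ffunP=> i; rewrite ffunE; case: unliftP => [j ->|->].
  by rewrite ffunE.
by [].
Qed.

Lemma weight_ext n (q : 'I_n.+1 -> R) f b :
  weight q (ext f b) =
  weight (fun j => q (widen_ord (leqnSn n) j)) f * (if b then q ord_max else 1 - q ord_max).
Proof.
rewrite /weight big_ord_recr /= ext_max; congr (_ * _).
by apply: eq_bigr => j _; rewrite ext_widen.
Qed.

Lemma weight_ge0 n (q : 'I_n -> R) w : (forall k, 0 <= q k <= 1) -> 0 <= weight q w.
Proof.
move=> hq; rewrite /weight; apply: prodr_ge0 => i _.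
by case: (w i); have /andP[h1 h2] := hq i; lra.
Qed.

Lemma weight_sum n (q : 'I_n -> R) : \sum_w weight q w = 1.
Proof.
rewrite /weight -(bigA_distr_bigA (fun i (b : bool) => if b then q i else 1 - q i)) /=.
apply: big1 => i _; rewrite big_bool /=; lra.
Qed.

Lemma ind_le_tot n (q : 'I_n -> R) (P : pred {ffun 'I_n -> bool}) (y t : R) :
  (forall k, 0 <= q k <= 1) -> 0 < t -> t <= y ->
  \sum_(w : {ffun 'I_n -> bool}) weight q w * (P w)%:R <= y / t.
Proof.
move=> hq ht tley.
apply: (le_trans (y := \sum_w weight q w)).
  apply: ler_sum => w _; have := weight_ge0 w hq.
  by case: (P w) => /= h; lra.
by rewrite weight_sum ler_pdivlMr // mul1r.
Qed.

Lemma ville n (q : 'I_n -> R) (g : 'I_n -> bool -> R) (y t : R) :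
  (forall k, 0 <= q k <= 1) -> (forall k b, 0 <= g k b) ->
  (forall k, q k * g k true + (1 - q k) * g k false <= 1) -> 0 <= y -> 0 < t ->
  \sum_(w : {ffun 'I_n -> bool}) weight q w *
     ([exists m : 'I_n.+1, t <= y * \prod_(k < n | (m <= k)%N) g k (w k)])%:R <= y / t.
Proof.
move=> hq hg hE hy ht.
elim: n q g y hq hg hE hy => [|n IH] q g y hq hg hE hy;
  (have [tley|ylt] := lerP t y; first exact: ind_le_tot).
  rewrite big1; first by rewrite divr_ge0 // ltW.
  move=> w _.
  case: existsP => [[m]|]; last by rewrite mulr0.
  by rewrite big_ord0 mulr1 leNgt ylt.
rewrite sum_ext.
set q' := fun j => q (widen_ord (leqnSn n) j).
set g' := fun j => g (widen_ord (leqnSn n) j).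
have hq' : forall k, 0 <= q' k <= 1 by move=> k; apply: hq.
have step : forall b, \sum_(f : {ffun 'I_n -> bool}) weight q (ext f b) *
     ([exists m : 'I_n.+2, t <= y * \prod_(k < n.+1 | (m <= k)%N) g k (ext f b k)])%:R
   <= (if b then q ord_max else 1 - q ord_max) * ((y * g ord_max b) / t).
  move=> b.
  have hb : 0 <= (if b then q ord_max else 1 - q ord_max).
    by case: b; have /andP[h1 h2] := hq ord_max; lra.
  apply: (le_trans (y := \sum_(f : {ffun 'I_n -> bool})
     (if b then q ord_max else 1 - q ord_max) * (weight q' f *
     ([exists m : 'I_n.+1, t <= (y * g ord_max b) * \prod_(k < n | (m <= k)%N) g' k (f k)])%:R))).
    apply: ler_sum => f _; rewrite weight_ext.
    rewrite [_ * (_ * _)]mulrCA -mulrA; apply: ler_wpM2l; first exact: weight_ge0.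
    case: existsP => [[m hm]|]; last by rewrite !mulr0 mulr_ge0 // ler0n.
    have hmn : (m <= n)%N.
      case: leqP => // hnm; move: hm.
      rewrite big_mkcond big_ord_recr /= big1 => [|k _].
        by rewrite leqNgt hnm /= !mulr1 leNgt ylt.
      rewrite ifF //; apply/negbTE; rewrite -ltnNge /=.
      exact: ltn_trans (ltn_ord k) hnm.
    case: existsP => [_|hn]; first by rewrite mulr1.
    exfalso; apply: hn; exists (inord m).
    move: hm; rewrite big_mkcond big_ord_recr /= hmn ext_max.
    move=> hm; apply: (le_trans hm).
    rewrite -mulrA [X in _ <= _ * X]mulrC le_eqVlt; apply/orP; left; apply/eqP.
    congr (_ * (_ * _)); rewrite [RHS]big_mkcond; apply: eq_bigr => k _.
    by rewrite inordK ?ltnS // ext_widen.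
  rewrite -mulr_sumr; apply: ler_wpM2l => //.
  apply: IH => //.
    by move=> k b'; apply: hg.
    by move=> k; apply: hE.
  exact: mulr_ge0.
rewrite big_bool /=.
apply: le_trans; first exact: lerD (step true) (step false).
rewrite /=.
set a := q ord_max; set g1 := g ord_max true; set g0 := g ord_max false.
have -> : a * (y * g1 / t) + (1 - a) * (y * g0 / t) = y / t * (a * g1 + (1 - a) * g0) by ring.
rewrite -[X in _ <= X]mulr1; apply: ler_wpM2l; last exact: hE.
by rewrite divr_ge0 // ltW.
Qed.

Lemma Yobs_null n (rT rC : 'I_n -> 'I_2 -> R) z i :
  (forall i j, rT i j = rC i j) ->
  Yobs rT rC z i = if z i then rC i ord0 - rC i ord_max else - (rC i ord0 - rC i ord_max).
Proof.
move=> e; rewrite /Yobs /robs !e /Zind.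
have -> : ((ord_max : 'I_2) == ord0) = false by [].
rewrite eqxx; case: (z i) => /=; ring.
Qed.

Lemma tail_m (C : int) (k n : nat) : (0 < C)%R -> (k < n)%N ->
  (C <= (k.+1)%:Z)%R = (minn `|C - 1|%N n <= k)%N.
Proof.
move=> hC hk; apply/idP/idP => hh; lia.
Qed.

End Gen.

Theorem theorem1 (R : realType) (n : nat) (Gamma alpha x0 : R) (phi : R -> R)
    (rT rC : 'I_n -> 'I_2 -> R) (p : 'I_n -> R) (s : 'S_n) :
  (0 < n)%N ->
  1 <= Gamma ->
  (forall x : R, 0 < x < 1 -> 0 <= phi x) ->
  0 < alpha < 1 ->
  0 < x0 ->
  0 < sigma2 phi Gamma n x0 ->
  H0 Gamma rT rC p ->
  (forall i : 'I_n,
     \sum_(z : assignment n | Yobs rT rC z i == 0) weight p z = 0) ->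
  (forall (z : assignment n) (k l : 'I_n), (k <= l)%N ->
     `|Yobs rT rC z (s k)| <= `|Yobs rT rC z (s l)|) ->
  \sum_(z : assignment n |
          `[< exists x : R, 0 < x < 1 /\
               falpha phi Gamma n alpha x0 x <=
               Tn phi (fun k => Yobs rT rC z (s k)) x >])
     weight p z <= alpha.
Proof.
move=> n0 G1 hphi /andP[a0 a1] x00 hsig [hnull hp] _ _.
set L := ln (1 / alpha).
have hL : 0 < L by apply: ln_gt0; rewrite ltr_pdivlMr // mul1r.
set lam := lambdan phi Gamma n alpha x0.
have hlam : 0 < lam by rewrite /lam /lambdan sqrtr_gt0 divr_gt0 // mulr_gt0.
set rho := rhoG Gamma.
have hG : 0 < 1 + Gamma by lra.
have hrho : 0 < rho < 1.
  rewrite /rho /rhoG ltr_pdivrMr // mul1r divr_gt0 //; lra.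
have hp' : forall i, 1 - rho <= p i <= rho.
  move=> i; have := hp i.
  have -> : 1 / (1 + Gamma) = 1 - rho.
    by rewrite /rho /rhoG; field; rewrite gt_eqF.
  by [].
set c := fun k : 'I_n => cw phi k.
have hc : forall k, 0 <= c k.
  move=> k; apply: hphi; rewrite divr_gt0 ?ltr0Sn //= ltr_pdivrMr ?ltr0Sn // mul1r.
  by rewrite ltr_nat ltnS ltn_ord.
set D := fun k : 'I_n => 1 + rho * (expR (c k * lam) - 1).
have hE1 : forall k, 1 <= expR (c k * lam).
  by move=> k; apply: le_trans (expR_ge1Dx _); rewrite lerDl mulr_ge0 ?hc // ltW.
have hD : forall k, 1 <= D k.
  move=> k0; rewrite /D lerDl; apply: mulr_ge0; last by rewrite subr_ge0 hE1.
  by case/andP: hrho => h1 _; exact: ltW.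
have hD0 : forall k, 0 < D k by move=> k; apply: lt_le_trans (hD k).
set d := fun i => rC i ord0 - rC i ord_max.
set pos := fun i (b : bool) => if b then 0 < d i else 0 < - d i.
set g := fun k b => expR (c k * lam * (pos (s k) b)%:R - ln (D k)).
set q := fun k => p (s k).
have hq : forall k, 0 <= q k <= 1.
  by move=> k; have := hp' (s k); rewrite /q; case/andP: hrho => h1 h2; lra.
have hE : forall k, q k * g k true + (1 - q k) * g k false <= 1.
  move=> k; rewrite /g !expRB lnK ?posrE //.
  set e1 := expR _; set e0 := expR _.
  have -> : q k * (e1 / D k) + (1 - q k) * (e0 / D k) = (q k * e1 + (1 - q k) * e0) / D k.
    by ring.
  rewrite ler_pdivrMr // mul1r /e1 /e0 /D /pos.
  have := hp' (s k); rewrite -/(q k) => /andP[hq1 hq2].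
  have := hE1 k; set E := expR (c k * lam) => hE.
  case: (ltrgtP 0 (d (s k))) => hd.
    rewrite oppr_gt0 (lt_gtF hd) /= mulr1 mulr0 expR0 -/E.
    have h1 : 0 <= rho - q k by rewrite subr_ge0.
    have h2 : 0 <= E - 1 by rewrite subr_ge0.
    have := mulr_ge0 h1 h2; lra.
  - rewrite oppr_gt0 hd /= mulr1 mulr0 expR0 -/E.
    have h1 : 0 <= q k - (1 - rho) by rewrite subr_ge0.
    have h2 : 0 <= E - 1 by rewrite subr_ge0.
    have := mulr_ge0 h1 h2; lra.
  - rewrite -hd oppr0 ltxx /= mulr0 expR0.
    have h2 : 0 <= E - 1 by rewrite subr_ge0.
    case/andP: hrho => hr1 _; have := mulr_ge0 (ltW hr1) h2; lra.
have hg : forall k b, 0 <= g k b by move=> k b; exact: expR_ge0.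
have ht : 0 < 1 / alpha by rewrite divr_gt0.
have V := ville hq hg hE ler01 ht.
set Q := fun w : {ffun 'I_n -> bool} =>
  [exists m : 'I_n.+1, 1 / alpha <= 1 * \prod_(k < n | (m <= k)%N) g k (w k)].
set h := fun z : assignment n => [ffun k => z (s k)] : {ffun 'I_n -> bool}.
have hbij : bijective h.
  exists (fun w : {ffun 'I_n -> bool} => [ffun i => w (s^-1%g i)] : assignment n).
    by move=> z; apply/ffunP => i; rewrite !ffunE permKV.
  by move=> w; apply/ffunP => k; rewrite !ffunE permK.
have main : \sum_(z : assignment n) weight p z * (Q (h z))%:R <= alpha.
  rewrite (eq_bigr (fun z => weight q (h z) * (Q (h z))%:R)); last first.
    move=> z _; congr (_ * _); rewrite /weight [LHS](reindex_inj (@perm_inj _ s)).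
    by apply: eq_bigr => k _; rewrite /h ffunE.
  have eq := reindex h (P := xpredT) (F := fun w => weight q w * (Q w)%:R) (onW_bij _ hbij).
  rewrite -eq; apply: (le_trans V).
  by rewrite div1r div1r invrK.
rewrite big_mkcond /=; apply: le_trans main; apply: ler_sum => z _.
case: asboolP => [[x [/andP[x0' x1] hfx]]|_]; last first.
  by rewrite mulr_ge0 ?ler0n // weight_ge0 // => i; have := hp' i; case/andP: hrho => h1 h2; lra.
suff -> : Q (h z) by rewrite mulr1.
have hf : falpha phi Gamma n alpha x0 x = 1 / lam * (L + \sum_(k < n | inTail x k) ln (D k)).
  by [].
have hS : forall P : pred 'I_n, 0 <= \sum_(k < n | P k) ln (D k).
  by move=> P; apply: sumr_ge0 => k _; apply: ln_ge0.
have hnx : ~~ (x < 1 / n.+1%:R).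
  apply/negP => hx; move: hfx; rewrite /Tn hx hf.
  have := hS (fun k => inTail x k); set S := \sum_(k < n | _) _ => hS'.
  have hpos : 0 < 1 / lam * (L + S) by rewrite mulr_gt0 ?divr_gt0 //; lra.
  by rewrite leNgt hpos.
have hT : Tn phi (fun k => Yobs rT rC z (s k)) x =
    \sum_(k < n | inTail x k) c k * (pos (s k) (h z k))%:R.
  rewrite /Tn (negbTE hnx); apply: eq_bigr => k _; rewrite Yobs_null // ffunE /pos /d.
  by case: (z (s k)).
set C := Num.ceil ((1 - x) * n.+1%:R).
have hC : (0 < C)%R by rewrite /C ceil_gt0 mulr_gt0 ?ltr0Sn // subr_gt0.
pose m : 'I_n.+1 := inord (minn `|C - 1|%N n).
have hm : forall k : 'I_n, inTail x k = (m <= k)%N.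
  move=> k; rewrite /inTail -/C /m inordK ?ltnS ?geq_minr //.
  exact: tail_m hC (ltn_ord k).
apply/existsP; exists m; rewrite mul1r.
rewrite hf hT !(eq_bigl _ _ hm) in hfx.
have hfx' : L + \sum_(k < n | (m <= k)%N) ln (D k) <=
    lam * \sum_(k < n | (m <= k)%N) c k * (pos (s k) (h z k))%:R.
  have := ler_wpM2l (ltW hlam) hfx.
  by rewrite mulrA div1r mulrV ?unitfE ?gt_eqF // mul1r.
have -> : alpha^-1 = expR L by rewrite /L lnK ?div1r // posrE ?invr_gt0.
rewrite /g mul1r -expR_sum ler_expR sumrB.
have -> : \sum_(k < n | (m <= k)%N) c k * lam * (pos (s k) (h z k))%:R =
    lam * \sum_(k < n | (m <= k)%N) c k * (pos (s k) (h z k))%:R.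
  by rewrite mulr_sumr; apply: eq_bigr => k _; rewrite mulrCA mulrA.
by rewrite lerBrDr.
Qed.
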